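(* Let $(S,+,\le)$ be a commutative partially ordered semigroup (addition monotone in each variable) in which every non-empty subset has an infimum and a supremum. Let $\mathcal X_0=\{0,\dots,\ell\}$ and $\mathcal X_1$ be totally ordered sets and $\mathcal X_2=\mathbb R$. Let $\Phi$ be a root system in a real vector space $V$, $\Psi=\Phi\cup\{0\}$, $\Phi^0\subseteq\dots\subseteq\Phi^\ell=\Phi$ closed subsystems, $\Psi^j=\Phi^j\cup\{0\}$, and $\lambda\in V^*$. For triply indexed vectors $\tau=(t_{vij})$, $\tau'=(t'_{vij})$ ($v\in\mathcal X_2$, $i\in\mathcal X_1$, $j\in\mathcal X_0$) define $f_\tau\colon\Psi\to S$ by $f_\tau(\alpha)=\sup\{t_{v_\alpha ij_\alpha}:i\in\mathcal X_1\}$, where $v_\alpha=\langle\alpha,\lambda\rangle$ and $j_\alpha$ is the least $j$ with $\alpha\in\Psi^j$. Then: (1) if $\tau$ is concave, $f_\tau$ is concave, i.e. $f_\tau(\sum_i a_i)\le\sum_i f_\tau(a_i)$ for every non-empty finite family $(a_i)$ in $\Psi$ with $\sum_ia_i\in\Psi$; (2) $f_{\tau\vee\tau'}\le f_\tau\bowtie f_{\tau'}$; (3) if $\tau$ is concave, $f_{\tau\vee\tau'}\le f_\tau\rtimes f_{\tau'}$; (4) if $\tau$ and $\tau'$ are concave, $f_{\tau\vee\tau'}\le f_\tau\curlyvee f_{\tau'}$.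
   Context: Operations on indexed vectors (all infima componentwise). Singly indexed vectors $\vec a\in S^{\mathcal X_0}$: $(\vec a\vee_1\vec b)_j=\inf\{a_{j_1}+b_{j_2}: j\le j_1=j_2,\text{ or } j_2\le j=j_1,\text{ or } j_1\le j_2=j\}$. Doubly indexed vectors $A=(\vec a_i)_{i\in\mathcal X_1}$: $(A\vee_2B)_i=\inf\{\vec a_{i_1}\vee_1\vec b_{i_2}: i\ge i_1=i_2,\text{ or } i_2\ge i=i_1,\text{ or } i_1\ge i_2=i\}$ (note the reversed order on $\mathcal X_1$). Triply indexed vectors $\rho=(A_v)_{v\in\mathbb R}$, $\sigma=(B_v)$: $(\rho\vee\sigma)_v=\inf\{A_{v_1}\vee_2B_{v_2}:v_1+v_2=v\}$. $\tau$ is concave if $\tau\le\tau\vee\tau$ componentwise. For functions $f,f'\colon\Psi\to S$ and $\alpha\in\Psi$ (sums ranging over elements of $\Psi$, families non-empty): $(f\bowtie f')(\alpha)=\inf_{a+a'=\alpha}f(a)+f'(a')$; $(f\rtimes f')(\alpha)=\inf_{\sum_ia_i+a'=\alpha}\sum_if(a_i)+f'(a')$; $(f\curlyvee f')(\alpha)=\inf_{\sum_ia_i+\sum_ja'_j=\alpha}\sum_if(a_i)+\sum_jf'(a'_j)$. Inequalities between functions are pointwise. *)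

(* Defs.v *)
From HB Require Import structures.
From mathcomp Require Import all_boot all_order all_algebra.
From mathcomp Require Import reals.
Set Implicit Arguments. Unset Strict Implicit. Unset Printing Implicit Defensive.
Import Order.TTheory GRing.Theory Num.Theory.
Local Open Scope ring_scope.

(* The inf / sup of a
   non-empty subset are given as operations (they are unique by
   antisymmetry); their value on the empty set is unconstrained. ---------- *)
Record cposg := CPOSG {
  cposg_sort :> Type;
  sadd : cposg_sort -> cposg_sort -> cposg_sort;
  sle : cposg_sort -> cposg_sort -> Prop;
  sinf : (cposg_sort -> Prop) -> cposg_sort;
  ssup : (cposg_sort -> Prop) -> cposg_sort;
  sle_refl : forall x, sle x x;
  sle_anti : forall x y, sle x y -> sle y x -> x = y;
  sle_trans : forall x y z, sle x y -> sle y z -> sle x z;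
  saddA : forall x y z, sadd x (sadd y z) = sadd (sadd x y) z;
  saddC : forall x y, sadd x y = sadd y x;
  sadd_monol : forall x y z, sle x y -> sle (sadd x z) (sadd y z);
  sadd_monor : forall x y z, sle x y -> sle (sadd z x) (sadd z y);
  sinf_lb : forall A, (exists a, A a) -> forall x, A x -> sle (sinf A) x;
  sinf_glb : forall A, (exists a, A a) ->
     forall y, (forall x, A x -> sle y x) -> sle y (sinf A);
  ssup_ub : forall A, (exists a, A a) -> forall x, A x -> sle x (ssup A);
  ssup_lub : forall A, (exists a, A a) ->
     forall y, (forall x, A x -> sle x y) -> sle (ssup A) y
}.

Definition ssum (S : cposg) (x : S) (s : seq S) : S := foldl (@sadd S) x s.

Section Vee.
Variables (S : cposg) (l : nat) (d : Order.disp_t) (I : orderType d)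
          (R : realType).
Local Notation J := 'I_l.+1.

Definition vee1 (a b : J -> S) : J -> S := fun j =>
  sinf (fun x => exists j1 j2 : J,
     [\/ (j <= j1)%N /\ j1 = j2, (j2 <= j)%N /\ j = j1 | (j1 <= j2)%N /\ j2 = j]
     /\ x = sadd (a j1) (b j2)).

(* doubly indexed vectors (note the reversed order on X_1) *)
Definition vee2 (A B : I -> J -> S) : I -> J -> S := fun i j =>
  sinf (fun x => exists i1 i2 : I,
     [\/ (i1 <= i)%O /\ i1 = i2, (i <= i2)%O /\ i = i1 | (i2 <= i1)%O /\ i2 = i]
     /\ x = vee1 (A i1) (B i2) j).

Definition vee3 (rho sigma : R -> I -> J -> S) : R -> I -> J -> S :=
  fun v i j => sinf (fun x => exists v1 v2 : R,
     v1 + v2 = v /\ x = vee2 (rho v1) (sigma v2) i j).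

Definition concave3 (tau : R -> I -> J -> S) : Prop :=
  forall v i j, sle (tau v i j) (vee3 tau tau v i j).
End Vee.

Section Roots.
Variables (R : realType) (V : vectType R).

Definition linear_form (f : V -> R) : Prop :=
  forall (c : R) (x y : V), f (c *: x + y) = c * f x + f y.

Definition root_system_on (U : {vspace V}) (Phi : seq V) : Prop :=
  0 \notin Phi /\ <<Phi>>%VS = U /\
  forall a, a \in Phi -> exists ac : V -> R,
    [/\ linear_form ac, ac a = 2 &
        forall b, b \in Phi -> b - ac b *: a \in Phi /\ ac b \is a Num.int].

Definition root_system (Phi : seq V) : Prop := root_system_on fullv Phi.

Definition closed_subsystem (Phi Phi' : seq V) : Prop :=
  [/\ {subset Phi' <= Phi}, root_system_on <<Phi'>>%VS Phi' &
      forall a b, a \in Phi' -> b \in Phi' -> a + b \in Phi -> a + b \in Phi'].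

Definition inPsi (Phi : seq V) (x : V) : bool := (x == 0) || (x \in Phi).
End Roots.

Section Ftau.
Variables (S : cposg) (R : realType) (V : vectType R) (l : nat)
          (d : Order.disp_t) (I : orderType d).
Variables (Phis : 'I_l.+1 -> seq V) (lam : V -> R).

(* j_alpha : least j with alpha in Psi^j (alpha in Psi^l = Psi is assumed) *)
Definition jidx (alpha : V) : 'I_l.+1 :=
  [arg min_(j < ord_max | inPsi (Phis j) alpha) (j : nat)]%N.

Definition ftau (tau : R -> I -> 'I_l.+1 -> S) (alpha : V) : S :=
  ssup (fun x => exists i : I, x = tau (lam alpha) i (jidx alpha)).
End Ftau.

Section FunOps.
Variables (S : cposg) (R : realType) (V : vectType R) (Phi : seq V).
Local Notation Psi := (inPsi Phi).

Definition fconcave (f : V -> S) : Prop :=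
  forall (a : V) (s : seq V), all Psi (a :: s) -> Psi (\sum_(x <- a :: s) x) ->
    sle (f (\sum_(x <- a :: s) x)) (ssum (f a) (map f s)).

Definition fbowtie (f f' : V -> S) (alpha : V) : S :=
  sinf (fun x => exists a a' : V,
     [/\ Psi a, Psi a', a + a' = alpha & x = sadd (f a) (f' a')]).

Definition frtimes (f f' : V -> S) (alpha : V) : S :=
  sinf (fun x => exists (a : V) (s : seq V) (a' : V),
     [/\ all Psi (a :: s), Psi a', \sum_(y <- a :: s) y + a' = alpha &
         x = sadd (ssum (f a) (map f s)) (f' a')]).

Definition fcurlyvee (f f' : V -> S) (alpha : V) : S :=
  sinf (fun x => exists (a : V) (s : seq V) (b : V) (t : seq V),
     [/\ all Psi (a :: s), all Psi (b :: t),
         \sum_(y <- a :: s) y + \sum_(y <- b :: t) y = alpha &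
         x = sadd (ssum (f a) (map f s)) (ssum (f' b) (map f' t))]).

Definition fle (f g : V -> S) : Prop := forall alpha, Psi alpha -> sle (f alpha) (g alpha).
End FunOps.

(* Main.v *)
Require Import Defs.
From HB Require Import structures.
From mathcomp Require Import all_boot all_order all_algebra.
From mathcomp Require Import reals.
From mathcomp Require Import zify ring lra.
From Stdlib Require Import ClassicalEpsilon.
Set Implicit Arguments. Unset Strict Implicit. Unset Printing Implicit Defensive.
Import Order.TTheory GRing.Theory Num.Theory.
Local Open Scope ring_scope.

Section LF.
Variables (R : realType) (V : vectType R) (f : V -> R) (hf : linear_form f).

Lemma lfD x y : f (x + y) = f x + f y.
Proof. by have := hf 1 x y; rewrite scale1r mul1r. Qed.
Lemma lf0 : f 0 = 0.
Proof. have := lfD 0 0; rewrite addr0 => h; lra. Qed.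
Lemma lfZ c x : f (c *: x) = c * f x.
Proof. by have := hf c x 0; rewrite !addr0 lf0 addr0. Qed.
Lemma lfN x : f (- x) = - f x.
Proof. by rewrite -scaleN1r lfZ mulN1r. Qed.
Lemma lfB x y : f (x - y) = f x - f y.
Proof. by rewrite lfD lfN. Qed.
Lemma lf_sum (T : Type) (s : seq T) (F : T -> V) :
  f (\sum_(y <- s) F y) = \sum_(y <- s) f (F y).
Proof.
elim: s => [|x s IH]; first by rewrite !big_nil lf0.
by rewrite !big_cons lfD IH.
Qed.
End LF.

Lemma addsub_sc (R : realType) (V : vectType R) (x a : V) (s t : R) :
  x + s *: a - t *: a = x + (s - t) *: a.
Proof. by rewrite -addrA -scalerBl. Qed.

Lemma pigeon (T : eqType) (u : nat -> T) (s : seq T) :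
  injective u -> (forall k, u k \in s) -> False.
Proof.
move=> inj us.
have := @uniq_leq_size _ (map u (iota 0 (size s).+1)) s.
rewrite map_inj_uniq // iota_uniq size_map size_iota ltnn => h.
suff : false by [].
by apply: h => // x /mapP[k _ ->].
Qed.

Section Roots.
Variables (R : realType) (V : vectType R) (Phi : seq V).
Hypothesis Phi0 : 0 \notin Phi.

Definition coroot (a : V) (c : V -> R) :=
  [/\ linear_form c, c a = 2 &
      forall b, b \in Phi -> b - c b *: a \in Phi /\ c b \is a Num.int].

Lemma refl_neg a c : a \in Phi -> coroot a c -> - a \in Phi.
Proof.
move=> aP [lc ca hc]; have := (hc a aP).1; rewrite ca.
suff -> : a - 2 *: a = - a by [].
by rewrite -{1}[a]scale1r -scalerBl; rewrite (_ : 1 - 2 = -1 :> R) ?scaleN1r //; lra.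
Qed.

Lemma uniq_cor a c c' : a \in Phi -> coroot a c -> coroot a c' ->
  forall b, b \in Phi -> c b = c' b.
Proof.
move=> aP [lc ca hc] [lc' ca' hc'] b bP.
apply/eqP; rewrite eq_sym -subr_eq0; apply/negPn/negP => ne.
set e := c' b - c b in ne.
pose u (k : nat) := b + (k%:R * e) *: a.
have uP : forall k, u k \in Phi.
  elim=> [|k IH]; first by rewrite /u mul0r scale0r addr0.
  have h1 := (hc' _ IH).1; have h2 := (hc _ h1).1.
  suff -> : u k.+1 = (u k - c' (u k) *: a) - c (u k - c' (u k) *: a) *: a by [].
  rewrite (lfB lc) (lfZ lc) ca /u (lfD lc') (lfZ lc') (lfD lc) (lfZ lc) ca ca'.
  rewrite !addsub_sc; congr (_ + _ *: _); rewrite /e -addn1 natrD; ring.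
have a0 : a != 0 by apply: contraNneq Phi0 => <-.
apply: (@pigeon _ u Phi) => // k m /addrI /eqP; rewrite -subr_eq0 -scalerBl scaler_eq0.
rewrite (negPf a0) orbF -mulrBl mulf_eq0 (negPf ne) orbF subr_eq0 eqr_nat.
by move/eqP.
Qed.


Variable cor : V -> V -> R.
Hypothesis hcor : forall a, a \in Phi -> coroot a (cor a).

Definition sr a x := x - cor a x *: a.

Lemma srP a x : a \in Phi -> x \in Phi -> sr a x \in Phi.
Proof. by move=> aP xP; have [_ _ h] := hcor aP; exact: (h x xP).1. Qed.

Lemma sr_lin a k x y : a \in Phi -> sr a (k *: x + y) = k *: sr a x + sr a y.
Proof.
move=> aP; have [lc _ _] := hcor aP; rewrite /sr lc scalerDl scalerBr scalerA.
idtac.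
by rewrite opprD addrACA.
Qed.

Lemma srK a : a \in Phi -> forall x, sr a (sr a x) = x.
Proof.
move=> aP x; have [lc ca _] := hcor aP.
rewrite /sr (lfB lc) (lfZ lc) ca -addrA -opprD -scalerDl.
by rewrite (_ : cor a x + (cor a x - cor a x * 2) = 0) ?scale0r ?subr0 //; ring.
Qed.

Lemma cor_conj a b y : a \in Phi -> b \in Phi -> y \in Phi ->
  cor (sr a b) y = cor b (sr a y).
Proof.
move=> aP bP yP.
have sbP := srP aP bP.
apply: (uniq_cor sbP (hcor sbP) (c' := fun y => cor b (sr a y)) _ yP).
have [lb cbb hb] := hcor bP.
split.
- by move=> k x z; rewrite sr_lin // lb.
- by rewrite srK.
- move=> z zP; split; last by have := (hb _ (srP aP zP)).2.
  have := srP aP (hb _ (srP aP zP)).1.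
  by rewrite -scaleNr addrC sr_lin // srK // addrC scaleNr.
Qed.

Definition B x y := \sum_(b <- undup Phi) cor b x * cor b y.

Lemma B_sym x y : B x y = B y x.
Proof. by apply: eq_bigr => b _; rewrite mulrC. Qed.

Lemma B_lin1 x a k y : B (x - k *: a) y = B x y - k * B a y.
Proof.
rewrite /B mulr_sumr -sumrB; apply: eq_big_seq => b; rewrite mem_undup => bP.
have [lb _ _] := hcor bP; rewrite (lfB lb) (lfZ lb); ring.
Qed.

Lemma B_inv a x y : a \in Phi -> x \in Phi -> y \in Phi ->
  B (sr a x) (sr a y) = B x y.
Proof.
move=> aP xP yP; rewrite /B.
rewrite (eq_big_seq (fun b => cor (sr a b) x * cor (sr a b) y)); last first.
  by move=> b; rewrite mem_undup => bP; rewrite !cor_conj.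
rewrite -(big_map (sr a) xpredT (fun b => cor b x * cor b y)).
apply: perm_big; apply: uniq_perm.
- by rewrite (map_inj_uniq (can_inj (srK aP))) undup_uniq.
- exact: undup_uniq.
move=> z; apply/mapP/idP.
- by move=> [w]; rewrite !mem_undup => wP ->; apply: srP.
- rewrite mem_undup => zP; exists (sr a z); first by rewrite mem_undup srP.
  by rewrite srK.
Qed.

Lemma B_pos a : a \in Phi -> 4 <= B a a.
Proof.
move=> aP; rewrite /B (bigD1_seq a) ?mem_undup ?undup_uniq //=.
have [_ ca _] := hcor aP; rewrite ca.
rewrite (_ : 4 = 2 * 2 + 0) ?lerD2l; last by ring.
by apply: sumr_ge0 => i _; rewrite -expr2 sqr_ge0.
Qed.

Lemma B_cor b x : b \in Phi -> x \in Phi -> cor b x * B b b = 2 * B x b.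
Proof.
move=> bP xP; have := B_inv bP xP bP.
have [_ cb _] := hcor bP.
rewrite {2}/sr cb B_sym B_lin1 /sr B_sym B_lin1 B_sym => h.
have e : B b b = B b b by [].
lra.
Qed.

Lemma expand_sq (T : Type) (r : seq T) (P Q : T -> R) (p q : R) :
  \sum_(b <- r) (q * P b - p * Q b) ^+ 2 =
  q ^+ 2 * (\sum_(b <- r) P b * P b) - 2 * q * p * (\sum_(b <- r) P b * Q b)
  + p ^+ 2 * (\sum_(b <- r) Q b * Q b).
Proof.
rewrite !mulr_sumr -sumrB -big_split /=.
by apply: eq_bigr => i _; ring.
Qed.

Lemma cs_gen (T : Type) (r : seq T) (P Q : T -> R) :
  0 < \sum_(b <- r) Q b * Q b ->
  (\sum_(b <- r) P b * Q b) ^+ 2 <=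
    (\sum_(b <- r) P b * P b) * \sum_(b <- r) Q b * Q b.
Proof.
move=> qpos.
have h : 0 <= \sum_(b <- r) ((\sum_(b <- r) Q b * Q b) * P b
                            - (\sum_(b <- r) P b * Q b) * Q b) ^+ 2.
  by apply: sumr_ge0 => i _; rewrite sqr_ge0.
move: h qpos; rewrite expand_sq.
move: (\sum_(b <- r) Q b * Q b) (\sum_(b <- r) P b * Q b) (\sum_(b <- r) P b * P b).
move=> q p pp h qpos; nra.
Qed.

Lemma B_cs x y : x \in Phi -> y \in Phi -> B x y ^+ 2 <= B x x * B y y.
Proof.
move=> xP yP; apply: cs_gen; apply: lt_le_trans (B_pos yP); lra.
Qed.


Lemma int_ge1 (x : R) : x \is a Num.int -> 0 < x -> 1 <= x.
Proof.
move=> /intrP[z ->]; rewrite ltr0z => zp.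
by rewrite (_ : 1 = 1%:~R) // ler_int; lia.
Qed.

Lemma iter_eq (b d : V) (s : R) :
  (b + s *: d - 2 *: (b - d)) - (-2) *: b = b + (s + 2) *: d.
Proof.
rewrite scalerBr scaleNr opprK scalerDl opprB -addrA subrK -addrA.
rewrite [in RHS]scalerDl. reflexivity.
Qed.

Lemma int22 (n m : R) : n \is a Num.int -> m \is a Num.int -> 1 <= n -> 1 <= m ->
  n != 1 -> m != 1 -> n * m <= 4 -> n = 2.
Proof.
move=> nint mint n1 m1 n_ne1 m_ne1 nm4.
have [z ez] := intrP nint; have [w ew] := intrP mint.
rewrite ez in n_ne1 n1 nm4 *; rewrite ew in m_ne1 m1 nm4.
have hz : (1 <= z)%R by rewrite -(ler1z R).
have hw : (1 <= w)%R by rewrite -(ler1z R).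
have hz1 : z != 1 by apply: contra n_ne1 => /eqP ->; rewrite mulr1z.
have hw1 : w != 1 by apply: contra m_ne1 => /eqP ->; rewrite mulr1z.
have h4 : (4 : R) = (4 : int)%:~R by rewrite pmulrn.
have hzw : (z * w <= 4)%R by rewrite -(ler_int R) intrM -h4.
have -> : z = 2 by clear -hz hw hz1 hw1 hzw; nia.
by [].
Qed.

Lemma key b g : b \in Phi -> g \in Phi -> 0 < cor b g ->
  (b - g == 0) || (b - g \in Phi).
Proof.
move=> bP gP npos.
have [lb cbb hb] := hcor bP; have [lg cgg hg] := hcor gP.
have nint := (hb g gP).2; have mint := (hg b bP).2.
have Bb := B_pos bP; have Bg := B_pos gP.
have e1 := B_cor bP gP; have e2 := B_cor gP bP.
have cs := B_cs gP bP.
have Bs := B_sym b g.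
have Bbp : 0 < B b b by lra.
have Bgp : 0 < B g g by lra.
have p1 : 0 < cor b g * B b b by apply: mulr_gt0.
have p2 : 0 < cor g b * B g g by rewrite e2 Bs -e1; lra.
have mpos : 0 < cor g b by rewrite -(pmulr_lgt0 _ Bgp).
have e3 : (cor b g * cor g b) * (B b b * B g g) = 4 * B g b ^+ 2.
  have -> : (cor b g * cor g b) * (B b b * B g g) =
     (cor b g * B b b) * (cor g b * B g g) by ring.
  by rewrite e1 e2 Bs; ring.
have nm4 : cor b g * cor g b <= 4.
  rewrite -(ler_pM2r (mulr_gt0 Bbp Bgp)) e3; nra.
have n1 := int_ge1 nint npos; have m1 := int_ge1 mint mpos.
have [n_1|n_ne1] := eqVneq (cor b g) 1.
  apply/orP; right; have := (hb g gP).1; rewrite n_1 scale1r => h.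
  by have := refl_neg h (hcor h); rewrite opprB.
have [m_1|m_ne1] := eqVneq (cor g b) 1.
  by apply/orP; right; have := (hg b bP).1; rewrite m_1 scale1r.
have n2 : cor b g = 2 by apply: (int22 nint mint).
have m2 : cor g b = 2 by apply: (int22 mint nint) => //; rewrite mulrC.
apply/orP; left; apply/negPn/negP => d0.
set d := b - g in d0.
have eg : g = b - d by rewrite /d opprB addrC subrK.
have cbd : cor b d = 0 by rewrite /d (lfB lb) cbb n2 subrr.
have cgd : cor g d = 0 by rewrite /d (lfB lg) cgg m2 subrr.
pose u (k : nat) := b + (2 * k%:R) *: d.
have uP : forall k, u k \in Phi.
  elim=> [|k IH]; first by rewrite /u mulr0 scale0r addr0.
  have h := srP bP (srP gP IH).
  suff -> : u k.+1 = sr b (sr g (u k)) by [].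
  rewrite /sr /u (lfD lg) (lfZ lg) cgd m2 mulr0 addr0.
  rewrite (lfB lb) (lfD lb) !(lfZ lb) cbd n2 mulr0 addr0 cbb.
  rewrite (_ : 2 - 2 * 2 = -2 :> R); last by ring.
  rewrite eg iter_eq; congr (_ + _ *: _); rewrite -addn1 natrD; ring.
apply: (@pigeon _ u Phi) => // k m /addrI /eqP; rewrite -subr_eq0 -scalerBl scaler_eq0.
rewrite (negPf d0) orbF -mulrBr mulf_eq0 subr_eq0 eqr_nat.
rewrite (_ : (2 : R) == 0 = false) ?orFb; last by apply/eqP; lra.
by move/eqP.
Qed.


Lemma sum_pos_has (T : Type) (s : seq T) (F : T -> R) :
  0 < \sum_(x <- s) F x -> has (fun x => 0 < F x) s.
Proof.
elim: s => [|x s IH]; first by rewrite big_nil ltxx.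
rewrite big_cons /= => h; have [hx|hx] := ltP 0 (F x); first by []. by apply: IH; lra.
Qed.

Section Closed.
Variable Phi' : seq V.
Hypothesis hsub' : {subset Phi' <= Phi}.
Hypothesis hcl : forall a b, a \in Phi' -> b \in Phi' -> a + b \in Phi -> a + b \in Phi'.

Lemma closed_sum s : all (inPsi Phi') s -> inPsi Phi (\sum_(x <- s) x) ->
  inPsi Phi' (\sum_(x <- s) x).
Proof.
elim: {s}(size s).+1 {-2}s (ltnSn (size s)) => // n IH s sz alls.
have [->|nz] := eqVneq (\sum_(x <- s) x) 0; first by rewrite /inPsi eqxx.
rewrite /inPsi (negPf nz) /= => betaP.
set beta := \sum_(x <- s) x in nz betaP *.
have [lb cbb hb] := hcor betaP.
have : 0 < \sum_(x <- s) cor beta x.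
  by rewrite -(lf_sum lb s id) -/beta cbb; lra.
move=> /sum_pos_has /hasP[x xs cx].
have x0 : x != 0 by apply: contraTneq cx => ->; rewrite (lf0 lb) ltxx.
have xP' : x \in Phi' by have := allP alls x xs; rewrite /inPsi (negPf x0).
have xP := hsub' xP'.
have kx := key betaP xP cx.
have es : beta = x + \sum_(y <- rem x s) y.
  by rewrite /beta (perm_big _ (perm_to_rem xs)) big_cons.
have er : beta - x = \sum_(y <- rem x s) y by rewrite es addrC addKr.
have IHr : inPsi Phi' (\sum_(y <- rem x s) y).
  have sp : (0 < size s)%N by case: (s) xs.
  apply: IH; first by rewrite size_rem // -ltnS prednK.
    by apply/allP => y /mem_rem /(allP alls).
  by rewrite -er.
move: IHr; rewrite /inPsi => /orP[/eqP r0|rP'].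
  by move: betaP; rewrite es r0 addr0.
by rewrite es; apply: hcl => //; rewrite -es.
Qed.
End Closed.

End Roots.
Local Close Scope ring_scope.
Definition mx (L : seq nat) := foldr maxn 0 L.
Definition mt (j : nat) (L : seq nat) :=
  (j == mx L) || ((j < mx L) && (1 < count_mem (mx L) L)).
Definition mt3 (j j1 j2 : nat) :=
  [|| (j <= j1) && (j1 == j2), (j2 <= j) && (j == j1) | (j1 <= j2) && (j2 == j)].

Lemma mx_ge y L : y \in L -> y <= mx L.
Proof.
elim: L => [//|x L IH]; rewrite inE /= => /orP[/eqP->|/IH h]; first exact: leq_maxl.
exact: leq_trans h (leq_maxr _ _).
Qed.

Lemma mx_in L : L != [::] -> mx L \in L.
Proof.
elim: L => [//|x L IH] _; rewrite /= -/(mx L) inE.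
have [->|nL] := eqVneq L [::]; first by rewrite /= maxn0 eqxx.
have := IH nL; case: (leqP x (mx L)) => h.
  by move=> ->; rewrite orbT.
by rewrite eqxx.
Qed.

Lemma mx_cat A B : mx (A ++ B) = maxn (mx A) (mx B).
Proof. by elim: A => [|x A IH] /=; rewrite ?max0n // IH maxnA. Qed.

Lemma cnt_gt L x : mx L < x -> count_mem x L = 0.
Proof.
move=> h; apply/count_memPn; apply/negP => /mx_ge; lia.
Qed.

Lemma cnt_pos L : L != [::] -> 0 < count_mem (mx L) L.
Proof. by move/mx_in => h; rewrite lt0n; apply/eqP => /count_memPn; rewrite h. Qed.

Lemma comb j A B : A != [::] -> B != [::] -> mt j (A ++ B) ->
  exists j1 j2, [/\ j1 \in j :: A ++ B, j2 \in j :: A ++ B, mt3 j j1 j2,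
                    mt j1 A & mt j2 B].
Proof.
move=> nA nB.
have mA := mx_in nA; have mB := mx_in nB.
have cA := cnt_pos nA; have cB := cnt_pos nB.
rewrite /mt mx_cat count_cat.
move: mA mB cA cB; set MA := mx A; set MB := mx B => mA mB cA cB.
have memj : j \in j :: A ++ B by rewrite inE eqxx.
have memA : MA \in j :: A ++ B by rewrite inE mem_cat mA orbT.
have memB : MB \in j :: A ++ B by rewrite inE mem_cat mB !orbT.
have mem1 : maxn j MB \in j :: A ++ B by case: leqP => _.
have mem2 : maxn j MA \in j :: A ++ B by case: leqP => _.
have H : (maxn MA MB = MA /\ MA = MB /\ count_mem (maxn MA MB) A = count_mem MA A
              /\ count_mem (maxn MA MB) B = count_mem MB B) \/
         (maxn MA MB = MA /\ MB < MA /\ count_mem (maxn MA MB) B = 0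
              /\ count_mem (maxn MA MB) A = count_mem MA A) \/
         (maxn MA MB = MB /\ MA < MB /\ count_mem (maxn MA MB) A = 0
              /\ count_mem (maxn MA MB) B = count_mem MB B).
  case: (ltngtP MA MB) => h.
  - by right; right; do ?split => //; apply: cnt_gt.
  - by right; left; do ?split => //; apply: cnt_gt.
  - by left; rewrite h.
move: H cA cB.
move: (count_mem (maxn MA MB) A) (count_mem (maxn MA MB) B) (count_mem MA A) (count_mem MB B).
move: (maxn MA MB) => M xA xB cA' cB' H cA cB hyp.
exists (if (1 < cA') && (maxn j MB < MA) then maxn j MB else MA).
exists (if (1 < cB') && (maxn j MA < MB) then maxn j MA else MB).
split.
- by case: ifP.
- by case: ifP.
- case: ifP; case: ifP; rewrite /mt3; lia.
- case: ifP; lia.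
- case: ifP; lia.
Qed.
Local Open Scope ring_scope.

Section SG.
Variable S : cposg.

Lemma sadd_mono (a b c e : S) : sle a b -> sle c e -> sle (sadd a c) (sadd b e).
Proof.
move=> h1 h2; apply: sle_trans (sadd_monol c h1) _; exact: sadd_monor.
Qed.

Lemma ssum_cons (x y : S) (s : seq S) : sadd x (ssum y s) = ssum x (y :: s).
Proof.
rewrite /ssum /=; elim: s y => [|z s IH] y //=.
by rewrite IH saddA.
Qed.

Lemma ssum_mono (X : Type) (F G : X -> S) (a : X) (s : seq X) :
  (forall x, sle (F x) (G x)) -> sle (ssum (F a) (map F s)) (ssum (G a) (map G s)).
Proof.
move=> h; elim: s a => [|b s IH] a; first exact: h.
rewrite !map_cons.
rewrite -!ssum_cons; apply: sadd_mono => //.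
Qed.

Variables (l : nat) (d : Order.disp_t) (I : orderType d) (R : realType).
Local Notation J := 'I_l.+1.

Lemma VC (rho sigma : R -> I -> J -> S) v1 v2 i (j j1 j2 : J) :
  mt3 j j1 j2 -> sle (vee3 rho sigma (v1 + v2) i j) (sadd (rho v1 i j1) (sigma v2 i j2)).
Proof.
move=> h.
apply: (@sle_trans _ _ (vee2 (rho v1) (sigma v2) i j)).
  by apply: sinf_lb; [eexists|]; exists v1, v2.
apply: (@sle_trans _ _ (vee1 (rho v1 i) (sigma v2 i) j)).
  by apply: sinf_lb; [eexists|]; exists i, i; split => //; apply: Or31; split.
have hd : [\/ (j <= j1)%N /\ j1 = j2, (j2 <= j)%N /\ j = j1 | (j1 <= j2)%N /\ j2 = j].
  move: h; rewrite /mt3 => /or3P[/andP[h1 /eqP/val_inj h2]|/andP[h1 /eqP/val_inj h2]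
     |/andP[h1 /eqP/val_inj h2]].
  - by apply: Or31; split.
  - by apply: Or32; split.
  - by apply: Or33; split.
by apply: sinf_lb; [eexists|]; exists j1, j2; split.
Qed.

Lemma mt1 j n : mt j [:: n] -> j = n.
Proof. by rewrite /mt /= maxn0 eqxx /= addn0 ltnn andbF orbF => /eqP. Qed.

Lemma ord_of (L : seq nat) (k : nat) :
  (forall x, x \in L -> (x < l.+1)%N) -> k \in L -> exists o : J, nat_of_ord o = k.
Proof. by move=> h /h hk; exists (Ordinal hk). Qed.

Lemma bnd (X : Type) (Jf : X -> J) (j : J) (L : seq X) x :
  x \in nat_of_ord j :: map (fun y => nat_of_ord (Jf y)) L -> (x < l.+1)%N.
Proof.
rewrite inE => /orP[/eqP->//|]; elim: L => [//|y L IH] /=.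
by rewrite inE => /orP[/eqP->//|/IH].
Qed.

Lemma Gl (X : Type) (F : X -> R) (Jf : X -> J) (tau : R -> I -> J -> S) :
  concave3 tau -> forall (s : seq X) (a : X) (j : J) i,
  mt j (map (fun x => nat_of_ord (Jf x)) (a :: s)) ->
  sle (tau (\sum_(x <- a :: s) F x) i j)
      (ssum (tau (F a) i (Jf a)) (map (fun x => tau (F x) i (Jf x)) s)).
Proof.
move=> hc; elim=> [|b s IH] a j i.
  by move=> /mt1 /val_inj ->; rewrite big_seq1; apply: sle_refl.
move=> h; have := comb (A := [:: nat_of_ord (Jf a)]) (B := map (fun x => nat_of_ord (Jf x)) (b :: s)) isT isT h.
move=> [j1 [j2 [m1 m2 h3 h4 h5]]].
have [k1 ek1] := ord_of (@bnd _ Jf j (a :: b :: s)) m1.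
have [k2 ek2] := ord_of (@bnd _ Jf j (a :: b :: s)) m2.
subst j1 j2.
have ek : k1 = Jf a by apply: val_inj; apply: mt1.
subst k1.
rewrite big_cons -ssum_cons.
apply: sle_trans (hc _ _ _) _.
apply: sle_trans (VC _ _ _ _ _ h3) _.
apply: sadd_mono; first exact: sle_refl.
exact: IH.
Qed.

End SG.

Lemma bnd_map (l : nat) (X : Type) (Jf : X -> 'I_l.+1) (L : seq X) :
  all (fun x => x < l.+1)%N (map (fun y => nat_of_ord (Jf y)) L).
Proof. by elim: L => //= y L ->; rewrite ltn_ord. Qed.

Section Main.
Variables (S : cposg) (l : nat) (d : Order.disp_t) (I : orderType d)
  (hI : inhabited I) (R : realType) (V : vectType R)
  (Phi : seq V) (Phis : 'I_l.+1 -> seq V) (lam : V -> R).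
Hypothesis Phi0 : 0 \notin Phi.
Variable cor : V -> V -> R.
Hypothesis hcor : forall a, a \in Phi -> coroot Phi a (cor a).
Hypothesis hsub : forall j, closed_subsystem Phi (Phis j).
Hypothesis hmono : forall j k : 'I_l.+1, (j <= k)%N -> {subset Phis j <= Phis k}.
Hypothesis htop : Phis ord_max =i Phi.
Hypothesis hlam : linear_form lam.

Local Notation jx := (jidx Phis).
Local Notation Psi := (inPsi Phi).
Local Notation fj := (fun x => nat_of_ord (jx x)).

Lemma jidxP x : Psi x ->
  inPsi (Phis (jx x)) x /\ forall k, inPsi (Phis k) x -> (jx x <= k)%N.
Proof.
move=> xP.
have P0 : inPsi (Phis ord_max) x by rewrite /inPsi htop.
rewrite /jidx.
case: (@arg_minnP _ ord_max (fun j => inPsi (Phis j) x) (fun j => nat_of_ord j) P0).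
by move=> k Pk mk; split.
Qed.

Lemma jin x : Psi x -> inPsi (Phis (jx x)) x.
Proof. by case/jidxP. Qed.
Lemma jle x k : Psi x -> inPsi (Phis k) x -> (jx x <= k)%N.
Proof. by move=> /jidxP[_ h]; apply: h. Qed.

Lemma inPsi_mono (j k : 'I_l.+1) x : (j <= k)%N -> inPsi (Phis j) x -> inPsi (Phis k) x.
Proof. by move=> jk; rewrite /inPsi => /orP[->//|/(hmono jk) ->]; rewrite orbT. Qed.

Lemma inPsi_sub j x : inPsi (Phis j) x -> Psi x.
Proof.
have [hs _ _] := hsub j.
by rewrite /inPsi => /orP[->//|/hs ->]; rewrite orbT.
Qed.

Lemma inPsi_neg j x : inPsi (Phis j) x -> inPsi (Phis j) (- x).
Proof.
rewrite /inPsi => /orP[/eqP->|xP]; first by rewrite oppr0 eqxx.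
have [_ [_ [_ hc]] _] := hsub j.
have [ac hac] := hc x xP.
by rewrite (refl_neg xP hac) orbT.
Qed.

Lemma csum (k : 'I_l.+1) (s : seq V) : all (inPsi (Phis k)) s ->
  Psi (\sum_(x <- s) x) -> inPsi (Phis k) (\sum_(x <- s) x).
Proof.
have [hs _ hcl] := hsub k.
exact: (closed_sum Phi0 hcor hs hcl).
Qed.

Lemma RL (a : V) (s : seq V) : all Psi (a :: s) -> Psi (\sum_(x <- a :: s) x) ->
  mt (jx (\sum_(x <- a :: s) x)) (map fj (a :: s)).
Proof.
move=> allL alP.
set L := a :: s in allL alP *.
set al := \sum_(x <- L) x in alP *.
rewrite /mt.
have nL : map fj L != [::] by [].
have TL := mx_in nL.
set T := mx (map fj L) in TL *.
have [x0 x0L eT0] := mapP TL.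
have Tb : (T < l.+1)%N by rewrite eT0 ltn_ord.
pose kT := Ordinal Tb.
have allT : all (inPsi (Phis kT)) L.
  apply/allP => x xL; apply: (@inPsi_mono (jx x)); first exact: mx_ge (map_f fj xL).
  exact: jin (allP allL x xL).
have ha : (jx al <= T)%N by apply: (jle alP (csum allT alP)).
have [eq|ne] := eqVneq (nat_of_ord (jx al)) T; first by rewrite eq.
have hlt : (jx al < T)%N by rewrite ltn_neqAle ne ha.
apply/orP; right; apply/andP; split => //.
rewrite ltnNge; apply/negP => c1.
have [x xL ex] : exists2 x, x \in L & fj x = T by exists x0.
have hrem : forall y, y \in rem x L -> (jx y < T)%N.
  move=> y yr; have yL := mem_rem yr.
  have := mx_ge (map_f fj yL); rewrite -/T leq_eqVlt => /orP[/eqP ey|//].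
  exfalso; move: c1.
  rewrite (permP (perm_map fj (perm_to_rem xL))) /= ex eqxx add1n ltnS.
  rewrite leqNgt -has_count => /hasPn/(_ _ (map_f fj yr)) /=.
  by rewrite ey eqxx.
have T0 : (0 < T)%N by apply: leq_ltn_trans hlt.
have Tm : (T.-1 < l.+1)%N by apply: leq_ltn_trans (leq_pred T) Tb.
pose km := Ordinal Tm.
have le_km : forall y : V, (jx y < T)%N -> (jx y <= km)%N.
  by move=> y h /=; rewrite -ltnS prednK.
have seqP : all (inPsi (Phis km)) (al :: map -%R (rem x L)).
  rewrite /= (inPsi_mono (le_km _ hlt) (jin alP)) /=.
  apply/allP => z /mapP[y yr ->]; apply: inPsi_neg.
  apply: inPsi_mono (le_km _ (hrem y yr)) _.
  apply: jin; apply: (allP allL); exact: (@mem_rem _ x L y yr).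
have sumE : \sum_(z <- al :: map -%R (rem x L)) z = x.
  by rewrite big_cons big_map sumrN /al (perm_big _ (perm_to_rem xL)) big_cons addrK.
have xP : Psi x := allP allL x xL.
have := csum seqP; rewrite sumE => /(_ xP) xkm.
have := jle xP xkm; rewrite /= ex.
by rewrite -ltnS prednK // ltnn.
Qed.


Section F.
Variable (tau : R -> I -> 'I_l.+1 -> S).

Lemma ftau_ub x i : sle (tau (lam x) i (jx x)) (ftau Phis lam tau x).
Proof. by apply: ssup_ub; [exists (tau (lam x) i (jx x)); exists i|exists i]. Qed.

Lemma ftau_le x y : (forall i, sle (tau (lam x) i (jx x)) y) ->
  sle (ftau Phis lam tau x) y.
Proof.
move=> h; apply: ssup_lub; last by move=> z [i ->]; exact: h.
by case: hI => i; exists (tau (lam x) i (jx x)); exists i.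
Qed.
End F.

Lemma lam_sum (s : seq V) : lam (\sum_(x <- s) x) = \sum_(x <- s) lam x.
Proof. exact: (lf_sum hlam s id). Qed.

Lemma part1 (tau : R -> I -> 'I_l.+1 -> S) : concave3 tau -> fconcave Phi (ftau Phis lam tau).
Proof.
move=> hc a s alls sP; apply: ftau_le => i.
rewrite lam_sum.
apply: sle_trans (Gl lam (Jf := jx) hc i (RL alls sP)) _.
by apply: ssum_mono => x; exact: ftau_ub.
Qed.

Lemma part2 (tau tau' : R -> I -> 'I_l.+1 -> S) : fle Phi (ftau Phis lam (vee3 tau tau'))
  (fbowtie Phi (ftau Phis lam tau) (ftau Phis lam tau')).
Proof.
move=> al alP; apply: sinf_glb.
  exists (sadd (ftau Phis lam tau al) (ftau Phis lam tau' 0)); exists al, 0.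
  by split => //; [rewrite /inPsi eqxx|rewrite addr0].
move=> z [a [a' [aP a'P e ->]]].
apply: ftau_le => i.
have hall : all Psi [:: a; a'] by rewrite /= aP a'P.
have hs : Psi (\sum_(x <- [:: a; a']) x) by rewrite big_cons big_seq1 e.
have hm := RL hall hs.
rewrite big_cons big_seq1 e in hm.
have := comb (A := [:: nat_of_ord (jx a)]) (B := [:: nat_of_ord (jx a')]) isT isT hm.
move=> [j1 [j2 [_ _ h3 h4 h5]]].
rewrite (mt1 h4) (mt1 h5) in h3.
have -> : lam al = lam a + lam a' by rewrite -e (lfD hlam).
apply: sle_trans (VC _ _ _ _ _ h3) _.
by apply: sadd_mono; exact: ftau_ub.
Qed.


Lemma part3 (tau tau' : R -> I -> 'I_l.+1 -> S) : concave3 tau ->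
  fle Phi (ftau Phis lam (vee3 tau tau'))
    (frtimes Phi (ftau Phis lam tau) (ftau Phis lam tau')).
Proof.
move=> hc al alP; apply: sinf_glb.
  exists (sadd (ssum (ftau Phis lam tau al) [::]) (ftau Phis lam tau' 0)).
  exists al, [::], 0.
  split => //; [by rewrite /= alP|by rewrite /inPsi eqxx|by rewrite big_seq1 addr0].
move=> z [a [s [a' [alls a'P e ->]]]].
apply: ftau_le => i.
have hall : all Psi (a :: s ++ [:: a']) by rewrite -cat_cons all_cat alls /= a'P.
have es : \sum_(x <- a :: s ++ [:: a']) x = al.
  by rewrite -cat_cons big_cat /= big_seq1 e.
have hs : Psi (\sum_(x <- a :: s ++ [:: a']) x) by rewrite es.
have hm := RL hall hs.
rewrite es -cat_cons map_cat in hm.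
have := comb (A := map fj (a :: s)) (B := [:: nat_of_ord (jx a')]) isT isT hm.
move=> [j1 [j2 [m1 _ h3 h4 h5]]].
rewrite (mt1 h5) in h3.
have hb : all (fun x => x < l.+1)%N
    (nat_of_ord (jx al) :: map fj (a :: s) ++ [:: nat_of_ord (jx a')]).
  by rewrite [all _ _]/= ltn_ord all_cat ltn_ord bnd_map /= ltn_ord.
have [k1 ek1] := ord_of (fun x hx => allP hb x hx) m1.
subst j1.
have -> : lam al = \sum_(x <- a :: s) lam x + lam a' by rewrite -e (lfD hlam) lam_sum.
apply: sle_trans (VC _ _ _ _ _ h3) _.
apply: sadd_mono; last exact: ftau_ub.
apply: sle_trans (Gl lam (Jf := jx) hc i h4) _.
by apply: ssum_mono => x; exact: ftau_ub.
Qed.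

Lemma part4 (tau tau' : R -> I -> 'I_l.+1 -> S) : concave3 tau -> concave3 tau' ->
  fle Phi (ftau Phis lam (vee3 tau tau'))
    (fcurlyvee Phi (ftau Phis lam tau) (ftau Phis lam tau')).
Proof.
move=> hc hc' al alP; apply: sinf_glb.
  exists (sadd (ssum (ftau Phis lam tau al) [::]) (ssum (ftau Phis lam tau' 0) [::])).
  exists al, [::], 0, [::].
  split => //; [by rewrite /= alP|by rewrite /= /inPsi eqxx|by rewrite !big_seq1 addr0].
move=> z [a [s [b [t [alls allt e ->]]]]].
apply: ftau_le => i.
have hall : all Psi (a :: s ++ b :: t) by rewrite -cat_cons all_cat alls allt.
have es : \sum_(x <- a :: s ++ b :: t) x = al.
  by rewrite -cat_cons big_cat /= e.
have hs : Psi (\sum_(x <- a :: s ++ b :: t) x) by rewrite es.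
have hm := RL hall hs.
rewrite es -cat_cons map_cat in hm.
have := comb (A := map fj (a :: s)) (B := map fj (b :: t)) isT isT hm.
move=> [j1 [j2 [m1 m2 h3 h4 h5]]].
have hb : all (fun x => x < l.+1)%N
    (nat_of_ord (jx al) :: map fj (a :: s) ++ map fj (b :: t)).
  by rewrite [all _ _]/= !ltn_ord all_cat bnd_map /= ltn_ord bnd_map.
have [k1 ek1] := ord_of (fun x hx => allP hb x hx) m1.
have [k2 ek2] := ord_of (fun x hx => allP hb x hx) m2.
subst j1 j2.
have -> : lam al = \sum_(x <- a :: s) lam x + \sum_(x <- b :: t) lam x.
  by rewrite -e (lfD hlam) !lam_sum.
apply: sle_trans (VC _ _ _ _ _ h3) _.
apply: sadd_mono.
  apply: sle_trans (Gl lam (Jf := jx) hc i h4) _.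
  by apply: ssum_mono => x; exact: ftau_ub.
apply: sle_trans (Gl lam (Jf := jx) hc' i h5) _.
by apply: ssum_mono => x; exact: ftau_ub.
Qed.

End Main.

Unset Implicit Arguments.

Theorem lemmaB7 (S : cposg) (l : nat) (d : Order.disp_t) (I : orderType d)
  (hI : inhabited I) (R : realType) (V : vectType R)
  (Phi : seq V) (Phis : 'I_l.+1 -> seq V) (lam : V -> R)
  (hPhi : root_system Phi)
  (hsub : forall j, closed_subsystem Phi (Phis j))
  (hmono : forall j k : 'I_l.+1, (j <= k)%N -> {subset Phis j <= Phis k})
  (htop : Phis ord_max =i Phi)
  (hlam : linear_form lam)
  (tau tau' : R -> I -> 'I_l.+1 -> S) :
  let f := ftau Phis lam tau in
  let f' := ftau Phis lam tau' in
  let g := ftau Phis lam (vee3 tau tau') in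
  [/\ concave3 tau -> fconcave Phi f,
      fle Phi g (fbowtie Phi f f'),
      concave3 tau -> fle Phi g (frtimes Phi f f') &
      concave3 tau -> concave3 tau' -> fle Phi g (fcurlyvee Phi f f')].
Proof.
move=> f f' g.
have [Phi0 [_ hroots]] := hPhi.
have hex : forall a, exists c : V -> R, a \in Phi -> coroot Phi a c.
  move=> a; case: (boolP (a \in Phi)) => aP.
    by have [c hc] := hroots a aP; exists c.
  by exists (fun _ => 0).
pose cor a := proj1_sig (constructive_indefinite_description _ (hex a)).
have hcor : forall a, a \in Phi -> coroot Phi a (cor a).
  by move=> a; exact: (proj2_sig (constructive_indefinite_description _ (hex a))).
split.
- exact: (part1 hI Phi0 hcor hsub hmono htop hlam).
- exact: (part2 hI Phi0 hcor hsub hmono htop hlam).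
- exact: (part3 hI Phi0 hcor hsub hmono htop hlam).
- exact: (part4 hI Phi0 hcor hsub hmono htop hlam).
Qed.
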